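(* Let $t\ge1$ be a power of two and $0\le k\le t$. Then $\mathrm{val}(\mathcal{F}[t,k])\le \dfrac{k^2\log(2t)}{t}$ (logarithm base 2).
   Context: An interval is a nonempty set $\{a,\ldots,b\}$ of integers; a $[t,k]$-interval system is a set of $k$ pairwise disjoint intervals in $[t]$. $\mathrm{val}(F)=\sum_{I\in F}1/|I|$ and for a distribution $\mathcal{F}$ over interval systems $\mathrm{val}(\mathcal{F})=\mathbb{E}_{F\sim\mathcal{F}}\mathrm{val}(F)$. For an interval $[a,b]$ and integer $c$, $[a,b]+c=[a+c,b+c]$, and $F+c=\{I+c:I\in F\}$. $\mathcal{F}[t,k]$ is the output distribution of the recursive randomized procedure $\mathrm{Sample}(t,k)$ ($0\le k\le t$): if $k=0$ return $\emptyset$; if $k=1$ return $\{[t]\}$; otherwise let $s=\lceil t/2\rceil$, sample $j\in\{0,\ldots,k\}$ with probability $\binom{s}{j}\binom{t-s}{k-j}/\binom{t}{k}$, compute $F_1=\mathrm{Sample}(s,j)$ and $F_2=\mathrm{Sample}(t-s,k-j)$ independently, and return $F_1\cup(F_2+s)$. *)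

(* Defs.v *)
From mathcomp Require Import all_boot all_order all_algebra.
From mathcomp Require Import reals exp.
Set Implicit Arguments. Unset Strict Implicit. Unset Printing Implicit Defensive.
Import Order.TTheory GRing.Theory Num.Theory.
Local Open Scope ring_scope.

(* An interval {a,...,b} (a <= b) of integers is represented by the pair (a, b).
   An interval system is a list of intervals. *)
Definition interval := (nat * nat)%type.
Definition isystem := seq interval.

Definition ilen (I : interval) : nat := (I.2 - I.1).+1.

Definition ishift (c : nat) (I : interval) : interval := (I.1 + c, I.2 + c)%N.
Definition sshift (c : nat) (F : isystem) : isystem := map (ishift c) F.

Definition val (R : realType) (F : isystem) : R :=
  \sum_(I <- F) ((ilen I)%:R)^-1.

(* A finite distribution over interval systems: a list of (probability, outcome)
   pairs.  Expected value of val: *)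
Definition dist (R : realType) := seq (R * isystem)%type.
Definition val_dist (R : realType) (D : dist R) : R :=
  \sum_(pF <- D) pF.1 * val R pF.2.

(* Sample(t,k), computed as an explicit output distribution.  [fuel] only
   guarantees termination: each recursive call strictly decreases t when
   t >= 2, so fuel = t suffices for every reachable call. *)
Fixpoint sample_aux (R : realType) (fuel t k : nat) : dist R :=
  match fuel with
  | 0 => [::]
  | fuel'.+1 =>
    if k == 0%N then [:: (1, [::])]
    else if k == 1%N then [:: (1, [:: (1%N, t)])]
    else
      let s := uphalf t in
      flatten
        [seq [seq (('C(s, j) * 'C(t - s, k - j))%:R / ('C(t, k))%:R * p1.1 * p2.1,
                   p1.2 ++ sshift s p2.2)
             | p1 <- sample_aux R fuel' s j, p2 <- sample_aux R fuel' (t - s) (k - j)]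
        | j <- iota 0 k.+1]
  end.

Definition sampleF (R : realType) (t k : nat) : dist R := sample_aux R t t k.

Definition log2 (R : realType) (x : R) : R := ln x / ln 2.

(* Main.v *)
Require Import Defs.
From mathcomp Require Import zify.
From mathcomp Require Import all_boot all_order all_algebra.
From mathcomp Require Import ring.
From mathcomp Require Import reals exp.
Import Order.TTheory GRing.Theory Num.Theory.
Local Open Scope ring_scope.

Open Scope nat_scope.
Lemma binjj a j : 'C(a, j.+2) * (j.+2 * j.+1) = a * a.-1 * 'C(a.-2, j).
Proof.
have h1 := mul_bin_diag a j.+1.
have h2 := mul_bin_diag a.-1 j.
rewrite mulnA [_ * j.+2]mulnC -h1 -mulnA [_ * j.+1]mulnC -h2 mulnA.
by [].
Qed.

Lemma sumN1 a b k : \sum_(j < k.+3) 'C(a, j) * 'C(b, k.+2 - j) * (nat_of_ord j == 1%N) = a * 'C(b, k.+1).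
Proof.
rewrite big_ord_recl big_ord_recl big1 /=.
  by rewrite /bump /= bin1 muln0 add0n !muln1 addn0.
by move=> i _; rewrite muln0.
Qed.

Lemma sumN2 a b k : \sum_(j < k.+3) 'C(a, j) * 'C(b, k.+2 - j) * (j * j.-1) =
  a * a.-1 * 'C(a.-2 + b, k).
Proof.
rewrite big_ord_recl big_ord_recl /= !muln0 !add0n.
rewrite -(binomial.Vandermonde a.-2 b k) big_distrr /=; apply: eq_bigr => i _.
rewrite /bump /= !add1n subSS.
by rewrite mulnAC binjj mulnA.
Qed.

Lemma binle s k : (0 < s)%N -> 'C(s, k.+1) <= s * 'C((s * 2).-2, k).
Proof.
move=> uph_pow; have h := mul_bin_diag s k.
apply: (@leq_trans (k.+1 * 'C(s, k.+1))); first by rewrite leq_pmull.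
rewrite -h leq_mul2l; apply/orP; right; apply: leq_bin2l. lia.
Qed.

Close Scope nat_scope.

Definition mass {R : realType} (D : dist R) : R := \sum_(p <- D) p.1.

Lemma val_cat (R : realType) a c b : Defs.val R (a ++ sshift c b) = Defs.val R a + Defs.val R b.
Proof.
rewrite /Defs.val big_cat /= /sshift big_map; congr (_ + _).
by apply: eq_bigr => I _; rewrite /ilen /ishift /= subnDr.
Qed.

Definition wgt (R : realType) t k j : R :=
  ('C(uphalf t, j) * 'C(t - uphalf t, k - j))%:R / ('C(t, k))%:R.

Lemma sample_S (R : realType) fuel t k : sample_aux R fuel.+1 t k.+2 =
      flatten
        [seq [seq (('C(uphalf t, j) * 'C(t - uphalf t, k.+2 - j))%:R / ('C(t, k.+2))%:R * p1.1 * p2.1,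
                   p1.2 ++ sshift (uphalf t) p2.2)
             | p1 <- sample_aux R fuel (uphalf t) j, p2 <- sample_aux R fuel (t - uphalf t) (k.+2 - j)]
        | j <- iota 0 k.+3].
Proof. by []. Qed.

Lemma pair_sum (R : realType) (A B : seq (R * isystem)) (w : R) (f : isystem -> R) :
  \sum_(p1 <- A) \sum_(p2 <- B) w * p1.1 * p2.1 * (f p1.2 + f p2.2) =
  w * ((\sum_(p <- A) p.1 * f p.2) * (\sum_(p <- B) p.1) + (\sum_(p <- A) p.1) * (\sum_(p <- B) p.1 * f p.2)).
Proof.
rewrite mulrDr !big_distrl !big_distrr -big_split /=; apply: eq_bigr => p1 _.
rewrite !mulrA !big_distrr -big_split /=; apply: eq_bigr => p2 _; ring.
Qed.

Lemma decomp (R : realType) fuel t k :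
  val_dist (sample_aux R fuel.+1 t k.+2) =
  \sum_(j < k.+3) wgt R t k.+2 j *
     (val_dist (sample_aux R fuel (uphalf t) j) * mass (sample_aux R fuel (t - uphalf t) (k.+2 - j))
      + mass (sample_aux R fuel (uphalf t) j) * val_dist (sample_aux R fuel (t - uphalf t) (k.+2 - j))).
Proof.
rewrite /val_dist sample_S big_flatten big_map -[iota 0 k.+3]/(index_iota 0 k.+3) big_mkord.
apply: eq_bigr => j _; rewrite big_allpairs_dep /=.
under eq_bigr do under eq_bigr do rewrite val_cat.
exact: pair_sum.
Qed.

Lemma decompM (R : realType) fuel t k :
  mass (sample_aux R fuel.+1 t k.+2) =
  \sum_(j < k.+3) wgt R t k.+2 j *
     (mass (sample_aux R fuel (uphalf t) j) * mass (sample_aux R fuel (t - uphalf t) (k.+2 - j))).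
Proof.
rewrite /mass sample_S big_flatten big_map -[iota 0 k.+3]/(index_iota 0 k.+3) big_mkord.
apply: eq_bigr => j _; rewrite big_allpairs_dep /=.
rewrite big_distrl big_distrr /=; apply: eq_bigr => p1 _.
rewrite big_distrr /= big_distrr /=; apply: eq_bigr => p2 _.
rewrite /wgt; ring.
Qed.

Lemma uphalf_le t : (uphalf t <= t)%N.
Proof. by rewrite leq_uphalf_double -mul2n leq_pmull. Qed.

Lemma wgt_ge0 (R : realType) t k j : 0 <= wgt R t k j.
Proof. by rewrite /wgt divr_ge0 // ler0n. Qed.

Lemma sum_wgt (R : realType) t k : \sum_(j < k.+1) wgt R t k j <= 1.
Proof.
rewrite /wgt -big_distrl /= -natr_sum binomial.Vandermonde subnKC ?uphalf_le //.
have [->|h] := eqVneq ('C(t, k)%:R : R) 0; first by rewrite invr0 mulr0 ler01.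
by rewrite divff.
Qed.

Lemma basic_props (R : realType) fuel : forall t k,
  (0 <= mass (sample_aux R fuel t k) <= 1) /\ 0 <= val_dist (sample_aux R fuel t k).
Proof.
elim: fuel => [|fuel IH] t k.
  by rewrite /mass /val_dist /= !big_nil lexx ler01.
case: k => [|[|k]].
- by rewrite /mass /val_dist /= !big_cons !big_nil /Defs.val big_nil !addr0 mulr0 ler01 lexx.
- rewrite /mass /val_dist /= !big_cons !big_nil /Defs.val big_cons big_nil !addr0 mul1r ler01 lexx.
  by rewrite invr_ge0 ler0n.
split; last first.
  rewrite decomp; apply: sumr_ge0 => j _; apply: mulr_ge0; first exact: wgt_ge0.
  have [/andP[m1 _] v1] := IH (uphalf t) j.
  have [/andP[m2 _] v2] := IH (t - uphalf t)%N (k.+2 - j)%N.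
  by apply: addr_ge0; apply: mulr_ge0.
rewrite decompM; apply/andP; split.
  apply: sumr_ge0 => j _; apply: mulr_ge0; first exact: wgt_ge0.
  have [/andP[m1 _] v1] := IH (uphalf t) j.
  have [/andP[m2 _] v2] := IH (t - uphalf t)%N (k.+2 - j)%N.
  by apply: mulr_ge0.
apply: le_trans (sum_wgt R t k.+2); apply: ler_sum => j _.
apply: ler_piMr; first exact: wgt_ge0.
have [/andP[m1 m1'] _] := IH (uphalf t) j.
have [/andP[m2 m2'] _] := IH (t - uphalf t)%N (k.+2 - j)%N.
exact: mulr_ile1.
Qed.

Definition fb (R : realType) (m k : nat) : R :=
  (k == 1%N)%:R / (2 ^ m)%:R + (m * (k * k.-1))%:R / ((2 ^ m).-1)%:R.

Lemma uph_pow m : uphalf (2 ^ m.+1) = (2 ^ m)%N.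
Proof. by rewrite expnS mul2n uphalf_double. Qed.

Lemma sub_pow m : (2 ^ m.+1 - 2 ^ m)%N = (2 ^ m)%N.
Proof. by rewrite expnS mul2n -addnn addnK. Qed.

Lemma sym_sum (R : realType) s k (F : nat -> R) :
  \sum_(j < k.+3) ('C(s, j) * 'C(s, k.+2 - j))%:R * F (k.+2 - j)%N =
  \sum_(j < k.+3) ('C(s, j) * 'C(s, k.+2 - j))%:R * F j.
Proof.
rewrite (reindex_inj rev_ord_inj) /=; apply: eq_bigr => j _.
have hj : (j <= k.+2)%N by rewrite -ltnS.
by rewrite subSS subKn // mulnC.
Qed.

Lemma fb_sum (R : realType) m k :
  \sum_(j < k.+3) ('C(2 ^ m, j) * 'C(2 ^ m, k.+2 - j))%:R * fb R m j =
  ('C(2 ^ m, k.+1) + m * 2 ^ m * 'C((2 ^ m).-2 + 2 ^ m, k))%:R.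
Proof.
rewrite /fb.
under eq_bigr do rewrite mulrDr !mulrA -!natrM.
rewrite big_split /= -!big_distrl /= -!natr_sum.
rewrite [X in _ + (X%:R) / _](eq_bigr (fun i : 'I_k.+3 => m * ('C(2 ^ m, i) * 'C(2 ^ m, k.+2 - i) * (i * i.-1))))%N;
  last by move=> i _; rewrite mulnCA.
rewrite -big_distrr /= sumN1 sumN2.
have s0 : (0 < 2 ^ m)%N by rewrite expn_gt0.
rewrite natrM mulrAC (divff (x := (2 ^ m)%:R)) ?mul1r ?pnatr_eq0 -?lt0n // natrD.
congr (_ + _).
rewrite (_ : (m * (2 ^ m * (2 ^ m).-1 * 'C((2 ^ m).-2 + 2 ^ m, k)) =
   (m * 2 ^ m * 'C((2 ^ m).-2 + 2 ^ m, k)) * (2 ^ m).-1)%N); last by ring.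
case: m s0 => [|m] s0; first by rewrite !mul0n mul0r.
have s1 : (0 < (2 ^ m.+1).-1)%N by rewrite -ltnS prednK // -[1%N]/(2 ^ 0)%N ltn_exp2l.
by rewrite natrM mulfK // pnatr_eq0 -lt0n.
Qed.

Open Scope nat_scope.
Lemma key_nat m k :
  ((('C(2 ^ m, k.+1) + m * 2 ^ m * 'C((2 ^ m).-2 + 2 ^ m, k)) +
   ('C(2 ^ m, k.+1) + m * 2 ^ m * 'C((2 ^ m).-2 + 2 ^ m, k))) * (2 ^ m.+1).-1 <=
  m.+1 * (k.+2 * k.+1) * 'C(2 ^ m.+1, k.+2))%N.
Proof.
set s := (2 ^ m)%N.
have s0 : (0 < s)%N by rewrite expn_gt0.
have e2 : (2 ^ m.+1 = s * 2)%N by rewrite expnS mulnC.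
have f1 := binjj (2 ^ m.+1) k.
rewrite e2 in f1 *.
set Z := 'C((s * 2).-2, k) in f1 *.
have f2 : ('C(s, k.+1) <= s * Z)%N by apply: binle.
have f3 : (m * s * 'C(s.-2 + s, k) <= m * s * Z)%N.
  have [->|mpos] := posnP m; first by rewrite !mul0n.
  have s2 : (2 <= s)%N by rewrite /s -{1}(expn1 2) leq_exp2l.
  by rewrite /Z (_ : (s.-2 + s = (s * 2).-2)%N) //; lia.
rewrite [X in _ <= X](_ : _ = m.+1 * (s * 2 * (s * 2).-1 * Z)); last by rewrite -f1; ring.
have g : ('C(s, k.+1) + m * s * 'C(s.-2 + s, k) + ('C(s, k.+1) + m * s * 'C(s.-2 + s, k))
    <= m.+1 * (s * 2) * Z)%N by nia.
apply: (leq_trans (leq_mul g (leqnn _))).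
by rewrite (_ : m.+1 * (s * 2) * Z * (s * 2).-1 = m.+1 * (s * 2 * (s * 2).-1 * Z)) //; ring.
Qed.
Close Scope nat_scope.

Lemma fb_ge0 (R : realType) m k : 0 <= fb R m k.
Proof. by rewrite /fb addr_ge0 // divr_ge0 // ler0n. Qed.

Lemma key_ineq (R : realType) m k :
  \sum_(j < k.+3) wgt R (2 ^ m.+1) k.+2 j * (fb R m j + fb R m (k.+2 - j)) <= fb R m.+1 k.+2.
Proof.
rewrite /wgt uph_pow sub_pow.
under eq_bigr do rewrite mulrAC.
rewrite -big_distrl /=.
under eq_bigr do rewrite mulrDr.
rewrite big_split /= sym_sum fb_sum.
have [C0|Cpos] := posnP 'C(2 ^ m.+1, k.+2).
  by rewrite C0 invr0 mulr0 fb_ge0.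
have d0 : (0 < (2 ^ m.+1).-1)%N by rewrite -ltnS prednK ?expn_gt0 // -[1%N]/(2 ^ 0)%N ltn_exp2l.
rewrite /fb /= mul0r add0r ler_pdivrMr ?ltr0n // mulrAC ler_pdivlMr ?ltr0n //.
rewrite -natrD -!natrM ler_nat.
exact: key_nat.
Qed.

Lemma vbound (R : realType) fuel : forall m k,
  val_dist (sample_aux R fuel (2 ^ m) k) <= fb R m k.
Proof.
elim: fuel => [|fuel IH] m k.
  by rewrite /val_dist /= big_nil fb_ge0.
case: k => [|[|k]].
- by rewrite /val_dist /= big_cons big_nil /Defs.val big_nil addr0 mulr0 fb_ge0.
- rewrite /val_dist /= big_cons big_nil /Defs.val big_cons big_nil !addr0 mul1r /fb /=.
  rewrite !muln0 mul0r addr0 mul1r.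
  by rewrite /ilen /= subn1 prednK ?expn_gt0.
rewrite decomp.
case: m => [|m].
  rewrite big1 ?fb_ge0 // => j _; by rewrite /wgt (@bin_small (2 ^ 0) k.+2) // invr0 mulr0 mul0r.
apply: le_trans (key_ineq R m k); apply: ler_sum => j _.
apply: ler_wpM2l; first exact: wgt_ge0.
rewrite uph_pow sub_pow.
have [/andP[m1 m1'] v1] := basic_props R fuel (2 ^ m) j.
have [/andP[m2 m2'] v2] := basic_props R fuel (2 ^ m) (k.+2 - j)%N.
apply: lerD.
  apply: le_trans (IH m j); exact: ler_piMr.
apply: le_trans (IH m (k.+2 - j)%N); exact: ler_piMl.
Qed.

Lemma log2_pow (R : realType) n : log2 (2 * (2 ^ n)%:R : R) = n.+1%:R.
Proof.
have l2 : (0 : R) < ln 2 by apply: ln_gt0; rewrite ltr1n.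
rewrite /log2 natrX -exprS lnXn // -(mulr_natr (ln _)) mulrAC divff ?mul1r //.
by rewrite gt_eqF.
Qed.

Open Scope nat_scope.
Lemma final_nat n k t : (k.+2 <= t)%N ->
  (n * (k.+2 * k.+1) * t <= k.+2 ^ 2 * n.+1 * t.-1)%N.
Proof.
case: t => // t hk /=.
have h : (k.+1 * t.+1 <= k.+2 * t)%N by rewrite mulnS (mulSn k.+1) leq_add2r.
apply: (@leq_trans (n * k.+2 * (k.+2 * t))).
  have e : n * (k.+2 * k.+1) * t.+1 = n * k.+2 * (k.+1 * t.+1) by rewrite !mulnA (mulnAC _ k.+1).
  rewrite e.
  by rewrite leq_mul2l h orbT.
have e : n * k.+2 * (k.+2 * t) = k.+2 ^ 2 * n * t.
  ring.
rewrite e.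
by rewrite leq_mul2r leq_mul2l leqnSn !orbT.
Qed.
Close Scope nat_scope.

Theorem mainTheorem13 (R : realType) (n k : nat) (hk : (k <= 2 ^ n)%N) :
  val_dist (sampleF R (2 ^ n) k)
    <= (k ^ 2)%:R * log2 (2 * (2 ^ n)%:R : R) / (2 ^ n)%:R.
Proof.
apply: le_trans (vbound R (2 ^ n) n k) _.
rewrite log2_pow /fb.
have t0 : (0 < 2 ^ n)%N by rewrite expn_gt0.
case: k hk => [|[|k]] hk.
- rewrite /= !muln0 mul0r add0r mul0r.
  by rewrite divr_ge0 // mulr_ge0.
- rewrite eqxx /= !muln0 mul0r addr0 exp1n mul1r.
  apply: le_trans (_ : 1 * (2 ^ n)%:R^-1 <= _); first by rewrite mul1r.
  by apply: ler_wpM2r; rewrite ?invr_ge0 ?ler0n // mul1r ler1n.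
rewrite /= mul0r add0r.
have d0 : (0 < (2 ^ n).-1)%N by rewrite -ltnS prednK // (leq_trans _ hk).
rewrite ler_pdivrMr ?ltr0n // mulrAC ler_pdivlMr ?ltr0n // -!natrM ler_nat.
exact: final_nat.
Qed.
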